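(* If $p>2$ is a prime, then $P(p,2p)=P(p,p)=pO(p)$.
   Context: $O(p)$ is the multiplicative order of $2$ modulo $p$. For positive integers $m,n$, let $\mathbf{Z}_m$ be the integers modulo $m$ and $T:\mathbf{Z}_m^n\to\mathbf{Z}_m^n$, $T(a_0,\dots,a_{n-1})=(a_0+a_1,a_1+a_2,\dots,a_{n-1}+a_0)$. For $\mathbf{a}\in\mathbf{Z}_m^n$ the cycle length of $(T^k\mathbf{a})_{k\ge0}$ is the smallest positive integer $P$ such that there is $N$ with $T^{k+P}\mathbf{a}=T^k\mathbf{a}$ for all $k\ge N$. $P(m,n)$ denotes the maximum of these cycle lengths over all $\mathbf{a}\in\mathbf{Z}_m^n$. *)

(* Defs.v *)
From HB Require Import structures.
From mathcomp Require Import all_boot all_order all_algebra.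
Set Implicit Arguments. Unset Strict Implicit. Unset Printing Implicit Defensive.
Import GRing.Theory.
Local Open Scope ring_scope.

(* Vectors of Z_m^n, indices read cyclically: index n-1 is followed by 0. *)
Definition vec (m n : nat) := {ffun 'I_n -> 'Z_m}.

Definition Tmap (m n : nat) (a : vec m n) : vec m n :=
  [ffun i => a i + a (ordS i)].

Definition eventually_periodic (m n : nat) (a : vec m n) (P : nat) : Prop :=
  exists N : nat, forall k : nat, (N <= k)%N ->
    iter (k + P) (@Tmap m n) a = iter k (@Tmap m n) a.

Definition is_cycle_length (m n : nat) (a : vec m n) (P : nat) : Prop :=
  (0 < P)%N /\ eventually_periodic a P /\
  (forall Q : nat, (0 < Q)%N -> (Q < P)%N -> ~ eventually_periodic a Q).

(* v = P(m,n): the maximum of the cycle lengths over all a in Z_m^n. *)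
Definition is_Pmax (m n v : nat) : Prop :=
  (exists a : vec m n, is_cycle_length a v) /\
  (forall (a : vec m n) (Q : nat), is_cycle_length a Q -> (Q <= v)%N).

(* o = O(p): the multiplicative order of 2 modulo p. *)
Definition is_ord2 (p o : nat) : Prop :=
  (0 < o)%N /\ (2 ^ o)%N = 1%N %[mod p] /\
  (forall k : nat, (0 < k)%N -> (2 ^ k)%N = 1%N %[mod p] -> (o <= k)%N).

(* Main.v *)
Require Import Defs.
From mathcomp Require Import all_boot all_order all_algebra.
From mathcomp Require Import ring.
Import GRing.Theory.
Local Open Scope ring_scope.

Lemma sum_ind p k : (1 < p)%N ->
  \sum_(0 <= i < k * p) ((((i %% p) == 0)%N)%:R : 'Z_p) = k%:R.
Proof.
move=> p1; have p0 : (0 < p)%N by apply: ltnW.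
elim: k => [|k IH]; first by rewrite mul0n big_geq.
rewrite mulSn addnC (@big_cat_nat _ _ _ (k * p)) ?leq_addr //= IH.
rewrite -{1}(add0n (k * p)%N) big_addn addKn.
under eq_bigr => i _ do rewrite -modnDmr modnMl addn0.

rewrite big_ltn // mod0n eqxx.
rewrite big_nat big1; first by rewrite addr0 -natr1.
move=> i /andP[hi hip]; rewrite modn_small //.
by case: i hi {hip}.
Qed.

Section Gen.
Variables (p n : nat).
Hypothesis p1 : (1 < p)%N.

Definition Sft (a : vec p n) : vec p n := [ffun i => a (ordS i)].

Lemma TmapE (a : vec p n) : Tmap a = a + Sft a.
Proof. by apply/ffunP=> i; rewrite !ffunE. Qed.

Lemma SftD (a b : vec p n) : Sft (a + b) = Sft a + Sft b.
Proof. by apply/ffunP=> i; rewrite !ffunE. Qed.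

Lemma Sft0 : Sft 0 = 0.
Proof. by apply/ffunP=> i; rewrite !ffunE. Qed.

Lemma SftMn (a : vec p n) c : Sft (a *+ c) = Sft a *+ c.
Proof. by apply/ffunP=> i; rewrite !ffunE !ffunMnE ffunE. Qed.

Lemma iterSftMn k (a : vec p n) c : iter k Sft (a *+ c) = iter k Sft a *+ c.
Proof. by elim: k => //= k ->; rewrite SftMn. Qed.

Lemma iterSftD k (a b : vec p n) : iter k Sft (a + b) = iter k Sft a + iter k Sft b.
Proof. by elim: k => //= k ->; rewrite SftD. Qed.

Lemma TmapMn (a : vec p n) c : Tmap (a *+ c) = Tmap a *+ c.
Proof. by rewrite !TmapE SftMn mulrnDl. Qed.

Lemma iterTMn k (a : vec p n) c : iter k (@Tmap p n) (a *+ c) = iter k (@Tmap p n) a *+ c.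
Proof. by elim: k => //= k ->; rewrite TmapMn. Qed.

Lemma iterT_sum k (a : vec p n) :
  iter k (@Tmap p n) a = \sum_(j < k.+1) iter j Sft a *+ 'C(k, j).
Proof.
elim: k => [|k IH]; first by rewrite big_ord_recl big_ord0 /= addr0.
rewrite iterS IH TmapE.
have SS : Sft (\sum_(j < k.+1) iter j Sft a *+ 'C(k, j))
   = \sum_(j < k.+1) iter j.+1 Sft a *+ 'C(k, j).
  rewrite (big_morph Sft SftD Sft0); apply: eq_bigr => j _.
  by rewrite SftMn.
rewrite SS [in RHS]big_ord_recl /=.
under [in RHS]eq_bigr => j _ do rewrite /bump /= add1n binS mulrnDr.
rewrite big_split /= [in LHS]big_ord_recl /= addrA; congr (_ + _ + _).
  by rewrite !bin0.
rewrite [in RHS]big_ord_recr /= bin_small // mulr0n addr0.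
by apply: eq_bigr => i _; rewrite /bump add1n.
Qed.

Lemma vecMn_mod (x : vec p n) c d : c = d %[mod p] -> x *+ c = x *+ d.
Proof.
move=> h; apply/ffunP => i.
rewrite (ffunMnE x c i) (ffunMnE x d i).
rewrite -[x i *+ c]mulr_natr -[x i *+ d]mulr_natr.
congr (_ * _); apply: ord_inj.
by rewrite (val_Zp_nat p1 c) (val_Zp_nat p1 d).
Qed.

Lemma natZp_eq c d : ((c%:R : 'Z_p) = d%:R) -> c = d %[mod p].
Proof. by move/(congr1 (@nat_of_ord _)); rewrite (val_Zp_nat p1 c) (val_Zp_nat p1 d). Qed.

Lemma natZp_eq' c d : c = d %[mod p] -> ((c%:R : 'Z_p) = d%:R).
Proof. by move=> h; apply: ord_inj; rewrite (val_Zp_nat p1 c) (val_Zp_nat p1 d). Qed.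

Lemma iterT_p (hp : prime p) (a : vec p n) : iter p (@Tmap p n) a = a + iter p Sft a.
Proof.
have p0 : (0 < p)%N by apply: prime_gt0.
rewrite iterT_sum big_ord_recr /= binn mulr1n; congr (_ + _).
rewrite (bigD1 (Ordinal p0)) //= bin0 mulr1n big1 ?addr0 // => j hj.
rewrite (@vecMn_mod _ _ 0) //.
rewrite mod0n; apply/eqP; rewrite -/(dvdn _ _); apply: prime_dvd_bin => //.
rewrite ltn_ord andbT lt0n; apply: contra hj => /eqP h.
by apply/eqP; apply: ord_inj.
Qed.

Lemma iterSftE k (a : vec p n) i : iter k Sft a i = a (iter k (@ordS n) i).
Proof. by elim: k a => [//|k IH] a; rewrite iterSr IH ffunE iterS. Qed.

Lemma val_iter_ordS k (i : 'I_n) : nat_of_ord (iter k (@ordS n) i) = ((i + k) %% n)%N.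
Proof.
elim: k => [|k IH]; first by rewrite addn0 modn_small.
by rewrite iterS /= IH -addn1 modnDml addn1 addnS.
Qed.

Lemma iterSft_n (a : vec p n) : iter n Sft a = a.
Proof.
apply/ffunP => i; rewrite iterSftE; congr (a _); apply: ord_inj.
by rewrite val_iter_ordS modnDr modn_small.
Qed.

Definition sig (a : vec p n) : 'Z_p := \sum_i a i.
Definition fw (a : vec p n) : 'Z_p := \sum_i (nat_of_ord i)%:R * a i.

Lemma sigD (a b : vec p n) : sig (a + b) = sig a + sig b.
Proof. by rewrite /sig -big_split; apply: eq_bigr => i _; rewrite ffunE. Qed.

Lemma sigSft (a : vec p n) : sig (Sft a) = sig a.
Proof.
rewrite /sig [RHS](reindex_inj (@ordS_inj n)) /=.
by apply: eq_bigr => i _; rewrite ffunE.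
Qed.

Lemma sigT (a : vec p n) : sig (Tmap a) = 2 * sig a.
Proof. by rewrite TmapE sigD sigSft mulr_natl mulr2n. Qed.

Lemma sig_iter k (a : vec p n) : sig (iter k (@Tmap p n) a) = 2 ^+ k * sig a.
Proof.
elim: k => [|k IH]; first by rewrite expr0 mul1r.
by rewrite iterS sigT IH exprS mulrA.
Qed.

Lemma fwD (a b : vec p n) : fw (a + b) = fw a + fw b.
Proof. by rewrite /fw -big_split; apply: eq_bigr => i _; rewrite ffunE mulrDr. Qed.

Hypothesis pn : (p %| n)%N.

Lemma fwSft (a : vec p n) : fw a = fw (Sft a) + sig a.
Proof.
rewrite -(sigSft a) /fw /sig [LHS](reindex_inj (@ordS_inj n)) -big_split.
apply: eq_bigr => i _ /=; rewrite !ffunE.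
have -> : (((i.+1 %% n)%N)%:R : 'Z_p) = (i.+1)%:R.
  by apply: natZp_eq'; rewrite modn_dvdm.
by rewrite -natr1 mulrDl mul1r.
Qed.

Lemma fwT (a : vec p n) : fw (Tmap a) = 2 * fw a - sig a.
Proof.
move: (fwSft a) => E; rewrite TmapE fwD E.
ring.
Qed.

Lemma fw_iter k (a : vec p n) :
  2 * fw (iter k (@Tmap p n) a) = 2 ^+ k * (2 * fw a - k%:R * sig a).
Proof.
elim: k => [|k IH]; first by rewrite /= expr0 mul1r mul0r subr0.
rewrite iterS fwT sig_iter mulrBr IH exprS -natr1.
ring.
Qed.

Definition wit : vec p n := [ffun i => ((nat_of_ord i %% p == 0)%N)%:R].

Lemma fw_wit : fw wit = 0.
Proof.
rewrite /fw big1 // => i _; rewrite ffunE.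
case: eqP => h; last by rewrite mulr0.
have -> : ((nat_of_ord i)%:R : 'Z_p) = 0%:R by apply: natZp_eq'; rewrite h mod0n.
by rewrite mul0r.
Qed.

Lemma per_fix (b : vec p n) P Q : (0 < P)%N -> iter P (@Tmap p n) b = b ->
  eventually_periodic b Q -> iter Q (@Tmap p n) b = b.
Proof.
move=> P0 hb [N HN].
have fixm : forall m, iter (P * m) (@Tmap p n) b = b.
  by elim=> [|m IH]; rewrite ?muln0 // mulnS iterD IH hb.
by have := HN (P * N) (leq_pmull _ P0); rewrite addnC iterD !fixm.
Qed.

Lemma sig_wit k : n = (k * p)%N -> sig wit = k%:R.
Proof.
move=> nk; rewrite /sig.
under eq_bigr => i _ do rewrite ffunE.
rewrite -(big_mkord xpredT (fun i => ((i %% p == 0)%N)%:R)).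
by rewrite nk sum_ind.
Qed.

Lemma pow_iter (x : vec p n) : iter p (@Tmap p n) x = x *+ 2 ->
  forall m, iter (p * m) (@Tmap p n) x = x *+ (2 ^ m).
Proof.
move=> h; elim=> [|m IH]; first by rewrite muln0 expn0.
by rewrite mulnS iterD IH iterTMn h -mulrnA expnS mulnC.
Qed.
End Gen.

Lemma upper m n (P : nat) : (0 < P)%N ->
  (forall a : vec m n, eventually_periodic a P) ->
  forall (a : vec m n) Q, is_cycle_length a Q -> (Q <= P)%N.
Proof.
move=> P0 ep a Q [Q0 [_ hmin]]; rewrite leqNgt; apply/negP => lt.
exact: (hmin P P0 lt (ep a)).
Qed.


Section Main.
Variables (p o : nat).
Hypotheses (hp : prime p) (p2 : (2 < p)%N) (ho : is_ord2 p o).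

Lemma p1 : (1 < p)%N. Proof. exact: ltnW. Qed.

Lemma toNat1 c : (c%:R : 'Z_p) = 1 -> c = 1 %[mod p].
Proof. by move=> h; apply: (natZp_eq _ p1); rewrite h mulr1n. Qed.

Lemma o0 : (0 < o)%N. Proof. by case: ho. Qed.

Lemma two_pow_ord : (2 : 'Z_p) ^+ o = 1.
Proof. case: ho => _ [h _]; by rewrite -natrX (natZp_eq' _ p1 _ _ h) mulr1n. Qed.

Lemma ord_dvd Q : (2 : 'Z_p) ^+ Q = 1 -> (o %| Q)%N.
Proof.
move=> h; case: ho => o0 [_ hmin].
have h2 : (2 : 'Z_p) ^+ (Q %% o) = 1.
  by move: h; rewrite {1}(divn_eq Q o) exprD mulnC exprM two_pow_ord expr1n mul1r.
case: (posnP (Q %% o)) => [h0|hpos]; first by rewrite /dvdn h0.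
have := hmin _ hpos (toNat1 _ (etrans (natrX _ _ _) h2)).
by rewrite leqNgt ltn_pmod.
Qed.

Lemma cop2 : coprime p 2.
Proof.
rewrite prime_coprime //; apply/negP => /(dvdn_leq (isT : (0 < 2)%N)).
by rewrite leqNgt p2.
Qed.

Lemma cop_po : coprime p o.
Proof.
have pp : (p %| p)%N by [].
set w := wit p p.
have hs : sig p p w = 1%:R by apply: (sig_wit _ _ p1 1) (esym (mul1n p)).
have e1 := sig_iter p p p w.
rewrite (iterT_p _ _ p1 hp) iterSft_n sigD hs in e1.
have u : ((2 : 'Z_p) \is a GRing.unit) by rewrite (unitZpE _ p1) cop2.
have hp0 : (0 < p)%N by apply: prime_gt0.
have h2 : (2 : 'Z_p) ^+ p.-1 = 1.
  apply: (mulIr u); rewrite mul1r -exprSr prednK //.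
  by move: e1; rewrite mulr1 -natrD => <-.
case: ho => _ [_ hmin].
have hpm : (0 < p.-1)%N by rewrite -ltnS prednK // ltnW.
have := hmin _ hpm (toNat1 _ (etrans (natrX _ _ _) h2)).
move=> ol; rewrite prime_coprime //; apply/negP => /(dvdn_leq o0).
by rewrite leqNgt (leq_ltn_trans ol) // prednK // ltnSn.
Qed.

Lemma po0 : (0 < p * o)%N.
Proof. by rewrite muln_gt0 prime_gt0 // o0. Qed.

Lemma minimal n (pn : (p %| n)%N) (b : vec p n) s Q :
  iter (p * o) (@Tmap p n) b = b -> fw p n b = 0 -> sig p n b = s%:R ->
  coprime p s -> (0 < Q)%N -> (Q < p * o)%N -> ~ eventually_periodic b Q.
Proof.
move=> hb hf hs cs q0 qlt ep.
have hQ := per_fix _ _ _ _ _ po0 hb ep.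
have e1 := sig_iter p n Q b; rewrite hQ hs in e1.
have u : ((s%:R : 'Z_p) \is a GRing.unit) by rewrite (unitZpE _ p1).
have h2 : (2 : 'Z_p) ^+ Q = 1 by apply: (mulIr u); rewrite mul1r -e1.
have e2 := fw_iter _ _ p1 pn Q b; rewrite hQ hf hs h2 mulr0 sub0r mul1r in e2.
have e3 : (((Q * s)%N)%:R : 'Z_p) = 0%:R.
  by rewrite natrM mulr0n; apply/eqP; rewrite -oppr_eq0 -e2.
have pQ : (p %| Q)%N.
  rewrite -(Gauss_dvdl Q cs) /dvdn; apply/eqP; move: (natZp_eq _ p1 _ _ e3).
  by rewrite mod0n.
have oQ := ord_dvd _ h2.
have : (p * o %| Q)%N by rewrite Gauss_dvd ?cop_po // pQ oQ.
by move/(dvdn_leq q0); rewrite leqNgt qlt.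
Qed.

Lemma case_p : is_Pmax p p (p * o).
Proof.
have pp : (p %| p)%N by [].
have h2o : (2 ^ o = 1 %[mod p])%N by case: ho => _ [].
have hfix : forall a : vec p p, iter (p * o)%N (@Tmap p p) a = a.
  move=> a; have h1 : iter p (@Tmap p p) a = a *+ 2.
    by rewrite (iterT_p _ _ p1 hp) iterSft_n mulr2n.
  by rewrite (pow_iter _ _ _ h1 o) (vecMn_mod _ _ p1 _ _ _ h2o) mulr1n.
have ep : forall a : vec p p, eventually_periodic a (p * o)%N.
  by move=> a; exists 0%N => k _; rewrite iterD hfix.
split; last exact: (upper _ _ _ po0 ep).
exists (wit p p); split; first exact: po0.
split; first exact: ep.
move=> Q q0 ql.
exact: (minimal _ pp _ 1 _ (hfix _) (fw_wit _ _ p1)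
          (sig_wit _ _ p1 1 (esym (mul1n p))) (coprimen1 p) q0 ql).
Qed.

Lemma case_2p : is_Pmax p (2 * p) (p * o).
Proof.
have pn : (p %| 2 * p)%N by rewrite dvdn_mull.
have h2o : (2 ^ o = 1 %[mod p])%N by case: ho => _ [].
have hfix : forall b : vec p (2 * p), iter p (Sft p (2 * p)) b = b ->
    iter (p * o)%N (@Tmap p (2 * p)) b = b.
  move=> b hb; have h1 : iter p (@Tmap p (2 * p)) b = b *+ 2.
    by rewrite (iterT_p _ _ p1 hp) hb mulr2n.
  by rewrite (pow_iter _ _ _ h1 o) (vecMn_mod _ _ p1 _ _ _ h2o) mulr1n.
have Sft2 : forall a : vec p (2 * p),
    iter p (Sft p (2 * p)) (iter p (Sft p (2 * p)) a) = a.
  by move=> a; rewrite -iterD addnn -mul2n iterSft_n.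
have ep : forall a : vec p (2 * p), eventually_periodic a (p * o)%N.
  move=> a; exists p => k hk.
  rewrite -(subnK hk) -addnA (addnC p) !iterD hfix //.
  by rewrite (iterT_p _ _ p1 hp) iterSftD Sft2 addrC.
have hwit : iter p (Sft p (2 * p)) (wit p (2 * p)) = wit p (2 * p).
  apply/ffunP => i; rewrite iterSftE /wit !ffunE val_iter_ordS.
  by rewrite modn_dvdm ?dvdn_mull // modnDr.
split; last exact: (upper _ _ _ po0 ep).
exists (wit p (2 * p)); split; first exact: po0.
split; first exact: ep.
move=> Q q0 ql.
exact: (minimal _ pn _ 2 _ (hfix _ hwit) (fw_wit _ _ p1)
          (sig_wit _ _ p1 2 erefl) cop2 q0 ql).
Qed.
End Main.

Local Close Scope ring_scope.

Theorem proposition7p2 (p o : nat) :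
  prime p -> (2 < p)%N -> is_ord2 p o ->
  is_Pmax p (2 * p) (p * o) /\ is_Pmax p p (p * o).
Proof.
move=> hp p2 ho; split; [exact: (case_2p _ _ hp p2 ho) | exact: (case_p _ _ hp p2 ho)].
Qed.
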